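(* Let $(X,\|\cdot\|)$ be a Banach space and $(M,d)$ a metric space. Assume there exist increasing functions $\rho,\omega:[0,\infty)\to[0,\infty)$ tending to $\infty$ at $\infty$, a point $m_0\in M$, and for every $n\in\mathbb{N}$ a map $h_n:nB_X\to M$ with $h_n(0)=m_0$ and $\rho(\|x-y\|)\le d(h_n(x),h_n(y))\le\omega(\|x-y\|)$ for all $x,y\in nB_X$. Equip $M^4$ with the metric $d((a_i),(b_i))=\max_{1\le i\le4}d(a_i,b_i)$. Then there is a map $F:X\to M^4$ such that $\tilde\rho(\|x-y\|)\le d(F(x),F(y))\le\tilde\omega(\|x-y\|)$ for all $x,y\in X$, where $\tilde\rho(t)=\frac12\rho(t/2)$ and $\tilde\omega(t)=8\omega(3t)$.
   Context: $B_X$ denotes the closed unit ball of $X$, and $nB_X=\{x\in X:\|x\|\le n\}$. *)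

(* Defs.v *)
From HB Require Import structures.
From mathcomp Require Import all_boot all_order all_algebra.
From mathcomp Require Import all_classical all_reals all_analysis.
Set Implicit Arguments. Unset Strict Implicit. Unset Printing Implicit Defensive.
Import Order.TTheory GRing.Theory Num.Theory.
Import numFieldNormedType.Exports.
Local Open Scope classical_set_scope.
Local Open Scope ring_scope.

Definition is_metric (R : realType) (M : Type) (d : M -> M -> R) : Prop :=
  [/\ forall x y, 0 <= d x y,
      forall x y, d x y = 0 <-> x = y,
      forall x y, d x y = d y x &
      forall x y z, d x z <= d x y + d y z].

Definition incr_to_infty (R : realType) (f : R -> R) : Prop :=
  [/\ forall t, 0 <= t -> 0 <= f t,
      forall s t, 0 <= s -> s <= t -> f s <= f t &
      (f x @[x --> +oo%R] --> +oo%R)].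

Definition d4 (R : realType) (M : Type) (d : M -> M -> R) (a b : 'I_4 -> M) : R :=
  \big[Num.max/0]_(i < 4) d (a i) (b i).

(* Main.v *)
Require Import Defs.
From HB Require Import structures.
From mathcomp Require Import all_boot all_order all_algebra.
From mathcomp Require Import all_classical all_reals all_analysis.
From mathcomp Require Import zify ring lra.
Import Order.TTheory GRing.Theory Num.Theory Num.Def.
Import numFieldNormedType.Exports.
Local Open Scope classical_set_scope.
Set Implicit Arguments. Unset Strict Implicit.
Local Open Scope ring_scope.
Definition upf (R : realFieldType) (L r : R) : R := if L == 0 then 1 else (r - L) / L.
Definition dnf (R : realFieldType) (U r : R) : R := 2 * (U - r) / U.
Definition cf (R : realFieldType) (L U r : R) : R := Num.min (Num.min 1 (upf L r)) (dnf U r).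

Lemma min_diff (R : realFieldType) (a b a' b' : R) : a <= a' -> b' <= b ->
  - (b - b') <= Num.min a' b' - Num.min a b <= a' - a.
Proof.
move=> h1 h2; rewrite !minEle; case: ifP => H1; case: ifP => H2; apply/andP; split; lra.
Qed.

Lemma upfE (R : realFieldType) (L r : R) : 0 < L -> upf L r * L = r - L.
Proof. by move=> hL; rewrite /upf gt_eqF // mulrVK ?unitfE ?gt_eqF. Qed.

Lemma dnfE (R : realFieldType) (U r : R) : 0 < U -> dnf U r * U = 2 * (U - r).
Proof. by move=> hU; rewrite /dnf mulrVK ?unitfE ?gt_eqF. Qed.

Lemma upf_ge0 (R : realFieldType) (L r : R) : 0 <= L -> L <= r -> 0 <= upf L r.
Proof.
move=> h0 h1; rewrite /upf; case: eqP => // /eqP HL.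
have hL : 0 < L by rewrite lt_def HL h0.
have := upfE r hL; rewrite /upf (negbTE HL) => E; nra.
Qed.

Lemma cf_ge0 (R : realFieldType) (L U r : R) : 0 <= L -> L <= r -> r <= U -> 0 < U ->
  0 <= cf L U r.
Proof.
move=> h0 h1 h2 hU; rewrite /cf !le_min ler01 upf_ge0 //=.
have := dnfE r hU; nra.
Qed.

Lemma cf_le1 (R : realFieldType) (L U r : R) : cf L U r <= 1.
Proof. by rewrite /cf !ge_min lexx. Qed.

Lemma cf_plat (R : realFieldType) (L U r : R) : 0 <= L -> 2 * L <= r -> 2 * r <= U ->
  0 < U -> cf L U r = 1.
Proof.
move=> h0 h1 h2 hU.
apply/eqP; rewrite eq_le cf_le1 /= /cf !le_min lexx /=; apply/andP; split.
  rewrite /upf; case: eqP => // /eqP HL.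
  have hL : 0 < L by rewrite lt_def HL h0.
  have := upfE r hL; rewrite /upf (negbTE HL) => E; nra.
have := dnfE r hU; nra.
Qed.

Lemma cf_D1 (R : realFieldType) (L U r : R) : 0 <= r -> r <= U -> 0 < U ->
  cf L U r * r <= 2 * (U - r).
Proof.
move=> h0 h1 hU; have hc : cf L U r <= dnf U r by rewrite /cf ge_min lexx orbT.
have := dnfE r hU; nra.
Qed.

Lemma cf_D2 (R : realFieldType) (L U s : R) : 0 < L -> L <= s ->
  cf L U s * s <= 2 * (s - L).
Proof.
move=> hL h1; have hc1 : cf L U s <= 1 by apply: cf_le1.
have hc2 : cf L U s <= upf L s by rewrite /cf !ge_min lexx !orbT.
have := upfE s hL; case: (lerP s (2 * L)) => h2 E.
  nra.
nra.
Qed.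

Lemma cf_C (R : realFieldType) (L U r s : R) : 0 <= L -> L <= r -> r <= s -> s <= U -> 0 < U ->
  `|cf L U r - cf L U s| * r <= 2 * (s - r).
Proof.
move=> h0 h1 h2 h3 hU.
have hr : 0 <= r by lra.
have Eb r' : dnf U r' * U = 2 * (U - r') by apply: dnfE.
have hb : dnf U s <= dnf U r by have := Eb r; have := Eb s; nra.
have hb' : r * (dnf U r - dnf U s) <= 2 * (s - r) by have := Eb r; have := Eb s; nra.
have ha : Num.min 1 (upf L r) <= Num.min 1 (upf L s) /\
          r * (Num.min 1 (upf L s) - Num.min 1 (upf L r)) <= 2 * (s - r).
  rewrite /upf; case: eqP => [_|/eqP HL]; first by split; lra.
  have hL : 0 < L by rewrite lt_def HL h0.
  have := upfE r hL; have := upfE s hL; rewrite /upf (negbTE HL) => Es Er.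
  set u := (r - L) / L in Er *; set v := (s - L) / L in Es *.
  have huv : u <= v by nra.
  case: (lerP 1 u) => hu.
    have hv : 1 <= v by lra.
    case: (lerP 1 v) => hv'; split; lra.
  have hr2 : r <= 2 * L by nra.
  case: (lerP 1 v) => hv'; split; nra.
case: ha => ha1 ha2.
have := min_diff ha1 hb => /andP [k1 k2].
rewrite /cf; set D := (_ - _ : R).
have -> : `|D| * r = `|D * r| by rewrite normrM (ger0_norm hr).
rewrite ler_norml /D; apply/andP; split; nra.
Qed.
Definition seg (R : realFieldType) (a : nat -> nat) (r : R) : nat :=
  match pselect (exists j, r < (a j.+1)%:R) with
  | left e => ex_minn e | right _ => 0%N end.

Definition monon (a : nat -> nat) := forall i j, (i <= j)%N -> (a i <= a j)%N.

Lemma seg_spec (R : realFieldType) (a : nat -> nat) (r : R) :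
  a 0%N = 0%N -> (exists j, r < (a j.+1)%:R) -> 0 <= r ->
  (a (seg a r))%:R <= r /\ r < (a (seg a r).+1)%:R.
Proof.
move=> a0 ex r0; rewrite /seg; case: pselect => // e.
case: ex_minnP => j Hj Hmin; split => //.
case: j Hj Hmin => [|j] Hj Hmin; first by rewrite a0.
rewrite leNgt; apply/negP => /Hmin; lia.
Qed.

Lemma seg_uniq (R : realFieldType) (a : nat -> nat) (r : R) (j : nat) :
  monon a -> (a j)%:R <= r -> r < (a j.+1)%:R -> seg a r = j.
Proof.
move=> am h1 h2; rewrite /seg; case: pselect => [e|[]]; last by exists j.
case: ex_minnP => k Hk Hmin.
have := Hmin _ h2 => hkj.
apply/eqP; rewrite eqn_leq hkj /=; rewrite leqNgt; apply/negP => hjk.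
have : (a k.+1 <= a j)%N by apply: am.
rewrite -(ler_nat R) => h; lra.
Qed.

Lemma seg_mono (R : realFieldType) (a : nat -> nat) (r s : R) :
  (exists j, s < (a j.+1)%:R) -> r <= s -> (seg a r <= seg a s)%N.
Proof.
move=> ex hrs; rewrite /seg; case: pselect => // e.
case: pselect => [e'|[]]; last first.
  by case: ex => j hj; exists j; lra.
case: (ex_minnP e) => k Hk Hmin.
case: ex_minnP => k' Hk' _; apply: Hmin; lra.
Qed.
Lemma big_nat (R : realType) (f : R -> R) (b : R) (m : nat) :
  (f x @[x --> +oo%R] --> +oo%R) -> exists n : nat, (m <= n)%N /\ b <= f n%:R.
Proof.
move=> /cvgryPge /(_ b) [M [Mreal HM]].
exists (maxn m (Num.truncn M).+1); split; first exact: leq_maxl.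
apply: HM.
apply: (lt_le_trans (truncnS_gt _)).
by rewrite ler_nat leq_maxr.
Qed.

Lemma psi_lip (R : realType) (X : normedModType R) (L U : R) (x y : X) :
  0 <= L -> L <= `|x| -> `|x| <= `|y| -> `|y| <= U -> 0 < U ->
  `|cf L U `|x| *: x - cf L U `|y| *: y| <= 3 * `|x - y|.
Proof.
move=> h0 h1 h2 h3 hU.
set a := cf L U `|x|; set b := cf L U `|y|.
have -> : a *: x - b *: y = b *: (x - y) + (a - b) *: x.
  by rewrite scalerBr scalerBl [RHS]addrC [RHS]addrA subrK.
have hb0 : 0 <= b by apply: cf_ge0 => //; lra.
have hb1 : b <= 1 by apply: cf_le1.
have hC := cf_C h0 h1 h2 h3 hU; rewrite -/a -/b in hC.
have hd := lerB_dist y x; rewrite distrC in hd.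
apply: le_trans; first exact: ler_normD.
rewrite !normrZ (ger0_norm hb0).
have : b * `|x - y| <= `|x - y| by rewrite ler_piMl.
lra.
Qed.

Lemma psi_norm (R : realType) (X : normedModType R) (L U : R) (x : X) :
  0 <= L -> L <= `|x| -> `|x| <= U -> 0 < U ->
  `|cf L U `|x| *: x| = cf L U `|x| * `|x|.
Proof.
by move=> *; rewrite normrZ ger0_norm // cf_ge0.
Qed.

Lemma d4_ge (R : realType) (M : Type) (d : M -> M -> R) (a b : 'I_4 -> M) i :
  d (a i) (b i) <= d4 d a b.
Proof. exact: (le_bigmax _ (fun i => d (a i) (b i))). Qed.

Lemma d4_le (R : realType) (M : Type) (d : M -> M -> R) (a b : 'I_4 -> M) (B : R) :
  0 <= B -> (forall i, d (a i) (b i) <= B) -> d4 d a b <= B.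
Proof.
move=> hB H; rewrite /d4; apply: (big_ind (fun v => v <= B)) => //.
by move=> u v hu hv; rewrite ge_max hu hv.
Qed.

Lemma d4C (R : realType) (M : Type) (d : M -> M -> R) (a b : 'I_4 -> M) :
  (forall x y, d x y = d y x) -> d4 d a b = d4 d b a.
Proof. by move=> H; rewrite /d4; apply: eq_bigr => i _; rewrite H. Qed.

Lemma cover_lem (R : realType) (T : nat -> nat) (B : nat -> nat -> nat) (k : nat) (u : R) :
  (forall k, (2 * T k + 1 <= T k.+1)%N) -> monon T ->
  (forall i j, B i j = if j is j'.+1 then T (4 * j' + i + 1)%N else 0%N) ->
  monon (B (k.+1 %% 4)%N) ->
  (if k is k'.+1 then (T k')%:R else 0) <= u -> u < (T k.+1)%:R ->
  seg (B (k.+1 %% 4)%N) u = (k.+1 %/ 4)%N /\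
  cf (B (k.+1 %% 4)%N (k.+1 %/ 4)%N)%:R (B (k.+1 %% 4)%N (k.+1 %/ 4)%N.+1)%:R u = 1.
Proof.
move=> Tg Tmono hB Bm hu1 hu2.
have hu0 : 0 <= u.
  by move: hu1; case: (k) => [//|k'] hu1; apply: le_trans hu1.
have hk := divn_eq k.+1 4.
move: hk Bm; set i := (k.+1 %% 4)%N; set j := (k.+1 %/ 4)%N => hk Bm.
have hL : 2 * (B i j)%:R <= u.
  rewrite hB; move: hk; case: j => [|j'] hk; first lra.
  have ek : k = (4 * j' + i + 1).+2 by lia.
  rewrite ek /= in hu1.
  have := Tg (4 * j' + i + 1)%N; rewrite -(ler_nat R) natrD natrM /= => h1.
  lra.
have hBU : B i j.+1 = T k.+2.
  rewrite hB; congr T; lia.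
have hTk := Tg k.+1; rewrite -(ler_nat R) natrD natrM /= in hTk.
have hT0 : 0 <= (T k.+1)%:R :> R by [].
have hU : 2 * u <= (B i j.+1)%:R.
  by rewrite hBU; move: hu2 hTk hT0; set a := (T k.+1)%:R; set b := (T k.+2)%:R => *; lra.
have hU0 : 0 < (B i j.+1)%:R :> R.
  by rewrite hBU; move: hTk hT0; set a := (T k.+1)%:R; set b := (T k.+2)%:R => *; lra.
have hL0 : 0 <= (B i j)%:R :> R by [].
split.
  apply: seg_uniq => //; first lra.
  by rewrite hBU; move: hu2 hTk hT0; set a := (T k.+1)%:R; set b := (T k.+2)%:R => *; lra.
by apply: cf_plat.
Qed.

Theorem theorem4p4 (R : realType) (X : completeNormedModType R)
  (M : Type) (d : M -> M -> R) (rho omega : R -> R) (m0 : M)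
  (h : nat -> X -> M) :
  is_metric d ->
  incr_to_infty rho -> incr_to_infty omega ->
  (forall n : nat, h n 0 = m0) ->
  (forall (n : nat) (x y : X), `|x| <= n%:R -> `|y| <= n%:R ->
     rho `|x - y| <= d (h n x) (h n y) /\ d (h n x) (h n y) <= omega `|x - y|) ->
  exists F : X -> ('I_4 -> M), forall x y : X,
    (1 / 2) * rho (`|x - y| / 2) <= d4 d (F x) (F y) /\
    d4 d (F x) (F y) <= 8 * omega (3 * `|x - y|).
Proof.
move=> [d0 dE dsym dtri] [r0 rmono rinf] [w0 wmono winf] h0 hh.
have Hg : forall m : nat, exists n : nat,
    (2 * m + 1 <= n)%N /\ 2 * omega m%:R <= rho n%:R.
  by move=> m; apply: big_nat.
pose g m := proj1_sig (cid (Hg m)).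
have gP m : (2 * m + 1 <= g m)%N /\ 2 * omega m%:R <= rho (g m)%:R
  := proj2_sig (cid (Hg m)).
pose T k := iter k g 0%N.
have T0 : T 0%N = 0%N by [].
have Tg k : (2 * T k + 1 <= T k.+1)%N by case: (gP (T k)).
have Tr k : 2 * omega (T k)%:R <= rho (T k.+1)%:R by case: (gP (T k)).
have Tmono : monon T.
  move=> i j hij; rewrite -(subnK hij); elim: (j - i)%N => [//|n IH].
  rewrite addSn; apply: (leq_trans IH); have := Tg (n + i)%N; lia.
have Tge k : (k <= T k)%N.
  elim: k => [//|k IH]; have := Tg k; lia.
pose B (i j : nat) := if j is j'.+1 then T (4 * j' + i + 1)%N else 0%N.
have Bmono i : monon (B i).
  move=> [|j1] [|j2] //= hj; apply: Tmono; lia.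
have Bex i (u : R) : exists j, u < (B i j.+1)%:R.
  exists (Num.truncn u); rewrite /B; apply: (lt_le_trans (truncnS_gt u)).
  rewrite ler_nat; apply: (leq_trans _ (Tge _)); move: (Num.truncn u) => m; lia.
have Tex (u : R) : exists j, u < (T j.+1)%:R.
  exists (Num.truncn u); apply: (lt_le_trans (truncnS_gt u)).
  rewrite ler_nat; apply: (leq_trans _ (Tge _)); move: (Num.truncn u) => m; lia.
pose F := fun (x : X) (i : 'I_4) =>
  h (B i (seg (B i) `|x|).+1)
    (cf (B i (seg (B i) `|x|))%:R (B i (seg (B i) `|x|).+1)%:R `|x| *: x).
exists F.
have spec i (x : X) : (B i (seg (B i) `|x|))%:R <= `|x| /\
    `|x| < (B i (seg (B i) `|x|).+1)%:R.
  exact: (seg_spec (a := B i) (erefl _) (Bex i _) (normr_ge0 x)).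
have hup n (u v : X) : `|u| <= n%:R -> `|v| <= n%:R ->
    d (h n u) (h n v) <= omega `|u - v| by move=> a b; case: (hh n u v a b).
have hlo n (u v : X) : `|u| <= n%:R -> `|v| <= n%:R ->
    rho `|u - v| <= d (h n u) (h n v) by move=> a b; case: (hh n u v a b).
suff main : forall x y : X, `|x| <= `|y| ->
    (1 / 2) * rho (`|x - y| / 2) <= d4 d (F x) (F y) /\
    d4 d (F x) (F y) <= 8 * omega (3 * `|x - y|).
  move=> x y; case: (lerP `|x| `|y|) => hxy; first exact: main.
  rewrite d4C // distrC; apply: main; exact: ltW.
move=> x y hxy.
have hr0 : 0 <= `|x| by apply: normr_ge0.
have ht0 : 0 <= `|x - y| by apply: normr_ge0.
have hts : `|x - y| <= `|x| + `|y| by apply: ler_normB.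
have hsr : `|y| - `|x| <= `|x - y| by rewrite distrC; apply: lerB_dist.
have w3 : 0 <= omega (3 * `|x - y|) by apply: w0; lra.
have hs0' : 0 <= `|y| by apply: normr_ge0.
split; last first.
  apply: d4_le; first lra.
  move=> i; rewrite /F.
  have [hx1 hx2] := spec i x; have [hy1 hy2] := spec i y.
  have hmon : (seg (B i) `|x| <= seg (B i) `|y|)%N := seg_mono (Bex i `|y|) hxy.
  move: hx1 hx2 hy1 hy2 hmon.
  set jx := seg (B i) `|x|; set jy := seg (B i) `|y|.
  move=> hx1 hx2 hy1 hy2 hmon.
  have hLx : 0 <= (B i jx)%:R :> R by [].
  have hLy : 0 <= (B i jy)%:R :> R by [].
  have hUx : 0 < (B i jx.+1)%:R :> R by lra.
  have hUy : 0 < (B i jy.+1)%:R :> R by lra.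
  have cx0 := cf_ge0 hLx hx1 (ltW hx2) hUx.
  have cx1 := cf_le1 (B i jx)%:R (B i jx.+1)%:R `|x|.
  have cy0 := cf_ge0 hLy hy1 (ltW hy2) hUy.
  have cy1 := cf_le1 (B i jy)%:R (B i jy.+1)%:R `|y|.
  have nx := psi_norm hLx hx1 (ltW hx2) hUx.
  have ny := psi_norm hLy hy1 (ltW hy2) hUy.
  move: hmon; rewrite leq_eqVlt => /orP [/eqP e|lt].
    rewrite -e in hy1 hy2 hUy cy0 cy1 ny *.
    apply: le_trans (hup _ _ _ _ _) _.
    - rewrite nx; apply: le_trans (ler_piMl hr0 cx1) _; exact: ltW.
    - rewrite ny; apply: le_trans (ler_piMl hs0' cy1) _; exact: ltW.
    apply: le_trans (_ : omega (3 * `|x - y|) <= _); last lra.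
    apply: wmono; first exact: normr_ge0.
    apply: psi_lip => //; lra.
  have hxy' : (B i jx.+1)%:R <= (B i jy)%:R :> R by rewrite ler_nat; apply: Bmono.
  apply: le_trans (dtri _ m0 _) _.
  have e1 : d (h (B i jx.+1) (cf (B i jx)%:R (B i jx.+1)%:R `|x| *: x)) m0
      <= omega (3 * `|x - y|).
    rewrite -(h0 (B i jx.+1)); apply: le_trans (hup _ _ _ _ _) _.
    - rewrite nx; apply: le_trans (ler_piMl hr0 cx1) _; exact: ltW.
    - by rewrite normr0.
    rewrite subr0 nx; apply: wmono; first exact: mulr_ge0 cx0 hr0.
    have := cf_D1 (B i jx)%:R hr0 (ltW hx2) hUx; lra.
  have e2 : d m0 (h (B i jy.+1) (cf (B i jy)%:R (B i jy.+1)%:R `|y| *: y))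
      <= omega (3 * `|x - y|).
    rewrite -(h0 (B i jy.+1)); apply: le_trans (hup _ _ _ _ _) _.
    - by rewrite normr0.
    - rewrite ny; apply: le_trans (ler_piMl hs0' cy1) _; exact: ltW.
    rewrite sub0r normrN ny; apply: wmono; first exact: mulr_ge0 cy0 hs0'.
    have hLy' : 0 < (B i jy)%:R :> R by lra.
    have := cf_D2 (B i jy.+1)%:R hLy' hy1; lra.
  lra.
have hs0 : 0 <= `|y| by apply: normr_ge0.
have [hk1 hk2] := seg_spec (a := T) T0 (Tex `|y|) hs0.
set k := seg T `|y| in hk1 hk2.
have i0lt : (k.+1 %% 4 < 4)%N by apply: ltn_pmod.
pose i0 := Ordinal i0lt.
apply: le_trans (d4_ge _ _ _ i0).
rewrite /F; change (nat_of_ord i0) with (k.+1 %% 4)%N.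
have hB : forall i j, B i j = (if j is j'.+1 then T (4 * j' + i + 1)%N else 0%N) by [].
have ht2 : `|x - y| / 2 <= `|y| by lra.
have rt2 : rho (`|x - y| / 2) <= rho `|y| by apply: rmono => //; lra.
have rt0 : 0 <= rho (`|x - y| / 2) by apply: r0; lra.
have hyl : (if k is k'.+1 then (T k')%:R else 0) <= `|y|.
  move: hk1; case: (k) => [|k'] /= hk1 //; apply: le_trans hk1.
  by rewrite ler_nat; exact: (Tmono _ _ (leqnSn k')).
have [cy1 cy2] := @cover_lem R T B k `|y| Tg Tmono hB (Bmono _) hyl hk2.
have [sy1 sy2] := spec (k.+1 %% 4)%N y.
rewrite cy1 in sy1 sy2.
have [sx1 sx2] := spec (k.+1 %% 4)%N x.
case: (lerP (omega `|x|) (rho `|y| / 2)) => hfar.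
  rewrite cy1 cy2 scale1r.
  move: sx1 sx2; set jx := seg (B (k.+1 %% 4)%N) `|x| => sx1 sx2.
  set n := B (k.+1 %% 4)%N (k.+1 %/ 4)%N.+1 in sy2 *.
  set nx := B (k.+1 %% 4)%N jx.+1 in sx2 *.
  set Lx := (B (k.+1 %% 4)%N jx)%:R in sx1 *.
  have hLx : 0 <= Lx by [].
  have hUx : 0 < nx%:R :> R by lra.
  have nxn := psi_norm hLx sx1 (ltW sx2) hUx.
  have cx1 := cf_le1 Lx nx%:R `|x|.
  have e1 : rho `|y| <= d m0 (h n y).
    rewrite -(h0 n); have := hlo n 0 y; rewrite sub0r normrN normr0; apply => //; lra.
  have e2 : d m0 (h nx (cf Lx nx%:R `|x| *: x)) <= omega `|x|.
    rewrite -(h0 nx); apply: le_trans (hup nx 0 _ _ _) _.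
    - by rewrite normr0.
    - rewrite nxn; apply: le_trans (ler_piMl hr0 cx1) _; exact: ltW.
    rewrite sub0r normrN nxn; apply: wmono; last exact: ler_piMl hr0 cx1.
    by apply: mulr_ge0 => //; apply: cf_ge0 => //; lra.
  have := dtri m0 (h nx (cf Lx nx%:R `|x| *: x)) (h n y).
  lra.
have hxl : (if k is k'.+1 then (T k')%:R else 0) <= `|x|.
  move: hk1; case: (k) => [|k'] /= hk1 //.
  rewrite leNgt; apply/negP => hlt.
  have := wmono _ _ hr0 (ltW hlt).
  have := Tr k'.
  have := rmono _ _ (ler0n R (T k'.+1)) hk1.
  lra.
have hx2 : `|x| < (T k.+1)%:R by lra.
have [cx1 cx2] := @cover_lem R T B k `|x| Tg Tmono hB (Bmono _) hxl hx2.
rewrite cx1 cx2 cy1 cy2 !scale1r.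
set n := B (k.+1 %% 4)%N (k.+1 %/ 4)%N.+1 in sy2 *.
have := hlo n x y (ltW (le_lt_trans hxy sy2)) (ltW sy2).
have : rho (`|x - y| / 2) <= rho `|x - y| by apply: rmono => //; lra.
lra.
Qed.
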